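(* Suppose $P_{II*}\subseteq P_{II}$ is a chain (totally ordered by inclusion). Then for filters $\Xi,\Upsilon\in P_{III*}$, $\mathcal C_{\Xi\text{-unc}}=\mathcal C_{\Upsilon\text{-unc}}$ if and only if $\Xi=\Upsilon$.
   Context: Let $n\ge1$, $L=\{1,\dots,n\}$, and for $i\in L$ let $\mathcal H_i$ be a Hilbert space with $1<\dim\mathcal H_i<\infty$; $\mathcal H_X=\bigotimes_{i\in X}\mathcal H_i$ and $\mathcal D_X$ is the set of density operators on $\mathcal H_X$. $P_I$ is the set of partitions of $L$ ordered by refinement. For $\xi\in P_I$, $\mathcal D_{\xi\text{-unc}}=\{\varrho\in\mathcal D_L:\varrho=\bigotimes_{X\in\xi}\varrho_X,\ \varrho_X\in\mathcal D_X\}$, and for $S\subseteq P_I$, $\mathcal D_{S\text{-unc}}=\bigcup_{\xi\in S}\mathcal D_{\xi\text{-unc}}$. $P_{II}$ is the set of nonempty down-sets of $P_I$, ordered by inclusion; $P_{II*}$ is a nonempty subset of $P_{II}$ and $P_{III*}$ is the set of nonempty up-sets of $P_{II*}$. For $\Xi\in P_{III*}$: $\overline\Xi=P_{II*}\setminus\Xi$ and $\mathcal C_{\Xi\text{-unc}}=\bigcap_{\boldsymbol\xi'\in\overline\Xi}(\mathcal D_L\setminus\mathcal D_{\boldsymbol\xi'\text{-unc}})\cap\bigcap_{\boldsymbol\xi\in\Xi}\mathcal D_{\boldsymbol\xi\text{-unc}}$. *)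

(* Defs.v *)
From HB Require Import structures.
From mathcomp Require Import all_boot all_order all_algebra.
Set Implicit Arguments. Unset Strict Implicit. Unset Printing Implicit Defensive.
Import Order.TTheory GRing.Theory Num.Theory.
Local Open Scope ring_scope.

(* Sites are 'I_n (i.e. L = {1..n} shifted to {0..n-1}); H_i = C^(d i).
   A basis vector of H_X is a configuration: a dependent function giving for
   each i in X an index in 'I_(d i). *)
Definition ConfX (n : nat) (d : 'I_n -> nat) (X : {set 'I_n}) : finType :=
  {dffun forall i : {i : 'I_n | i \in X}, 'I_(d (val i))}.

Definition Conf (n : nat) (d : 'I_n -> nat) : finType :=
  {dffun forall i : 'I_n, 'I_(d i)}.

Definition restr (n : nat) (d : 'I_n -> nat) (X : {set 'I_n}) (a : Conf d)
  : ConfX d X := finfun (fun i : {i : 'I_n | i \in X} => a (val i)).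

(* Density operator on C^T (operators given by their matrix entries):
   positive semidefinite and of unit trace. *)
Definition is_density (C : numClosedFieldType) (T : finType) (rho : T -> T -> C)
  : Prop :=
  (forall v : T -> C, 0 <= \sum_(a : T) \sum_(b : T) (v a)^* * rho a b * v b)
  /\ \sum_(a : T) rho a a = 1.

Definition refines (n : nat) (xi eta : {set {set 'I_n}}) : Prop :=
  forall X, X \in xi -> exists2 Y, Y \in eta & X \subset Y.

Definition D_unc (n : nat) (d : 'I_n -> nat) (C : numClosedFieldType)
  (xi : {set {set 'I_n}}) (rho : Conf d -> Conf d -> C) : Prop :=
  is_density rho /\
  exists f : forall X : {set 'I_n}, ConfX d X -> ConfX d X -> C,
    (forall X, X \in xi -> is_density (f X)) /\
    forall a b : Conf d,
      rho a b = \prod_(X in xi) f X (restr X a) (restr X b).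

Definition D_S_unc (n : nat) (d : 'I_n -> nat) (C : numClosedFieldType)
  (S : {set {set {set 'I_n}}}) (rho : Conf d -> Conf d -> C) : Prop :=
  exists2 xi, xi \in S & D_unc xi rho.

Definition is_PII (n : nat) (S : {set {set {set 'I_n}}}) : Prop :=
  S != set0 /\
  (forall xi, xi \in S -> partition xi [set: 'I_n]) /\
  (forall xi eta, xi \in S -> partition eta [set: 'I_n] -> refines eta xi ->
     eta \in S).

Definition is_PIIstar (n : nat) (PS : {set {set {set {set 'I_n}}}}) : Prop :=
  PS != set0 /\ (forall S, S \in PS -> is_PII S).

Definition is_chain (n : nat) (PS : {set {set {set {set 'I_n}}}}) : Prop :=
  forall S T, S \in PS -> T \in PS -> S \subset T \/ T \subset S.

Definition is_PIIIstar (n : nat) (PS Xi : {set {set {set {set 'I_n}}}}) : Prop :=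
  Xi != set0 /\ Xi \subset PS /\
  (forall S T, S \in Xi -> T \in PS -> S \subset T -> T \in Xi).

Definition C_unc (n : nat) (d : 'I_n -> nat) (C : numClosedFieldType)
  (PS Xi : {set {set {set {set 'I_n}}}}) (rho : Conf d -> Conf d -> C) : Prop :=
  is_density rho /\
  (forall S', S' \in PS -> S' \notin Xi -> ~ D_S_unc S' rho) /\
  (forall S, S \in Xi -> D_S_unc S rho).

(* Main.v *)
Require Import Defs.
From HB Require Import structures.
From mathcomp Require Import all_boot all_order all_algebra.
Import Order.TTheory GRing.Theory Num.Theory.
Local Open Scope ring_scope.

Section Fub.
Variables (n : nat) (d : 'I_n -> nat) (z : Conf d).

Definition extf (X : {set 'I_n}) (u : ConfX d X) (i : 'I_n) : 'I_(d i) :=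
  match (i \in X) as b return (i \in X) = b -> 'I_(d i) with
  | true => fun Hi => (u : {dffun forall k : {k : 'I_n | k \in X}, 'I_(d (val k))}) (exist _ i Hi)
  | false => fun _ => z i end (erefl _).

Definition ext X (u : ConfX d X) : Conf d := [ffun i => extf X u i].

Lemma ext_in X (u : ConfX d X) i (Hi : i \in X) : ext X u i = (u : {dffun forall k : {k : 'I_n | k \in X}, 'I_(d (val k))}) (exist _ i Hi).
Proof.
rewrite ffunE /extf.
move: (erefl (i \in X)).
case: {2 3}(i \in X) => e //.
- by rewrite (bool_irrelevance e Hi).
- by rewrite Hi in e.
Qed.

Lemma ext_out X (u : ConfX d X) i : i \notin X -> ext X u i = z i.
Proof.
move=> Hi; rewrite ffunE /extf.
move: (erefl (i \in X)).
case: {2 3}(i \in X) => e //.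
by rewrite e in Hi.
Qed.

Lemma restr_ext X (u : ConfX d X) : restr X (ext X u) = u.
Proof. by apply/ffunP => -[i Hi]; rewrite ffunE /= (ext_in _ _ _ Hi). Qed.

Definition ZZ (X : {set 'I_n}) : pred (Conf d) :=
  fun a => [forall i, (i \notin X) ==> (a i == z i)].

Lemma sum_ConfX (C : nmodType) X (F : ConfX d X -> C) :
  \sum_(u : ConfX d X) F u = \sum_(a | ZZ X a) F (restr X a).
Proof.
rewrite (reindex_onto (@ext X) (@restr _ d X)) /=.
  apply: eq_big => u; last by rewrite restr_ext.
  rewrite restr_ext eqxx andbT /ZZ /=; apply/esym/forallP => i; apply/implyP => Hi.
  by rewrite ext_out.
move=> a /forallP Ha; apply/ffunP => i.
case Hi: (i \in X).
  by rewrite (ext_in _ _ _ Hi) ffunE.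
by rewrite ext_out ?Hi //; move/implyP: (Ha i); rewrite Hi => /(_ isT) /eqP.
Qed.

Variable xi : {set {set 'I_n}}.
Hypothesis Hp : partition xi [set: 'I_n].

Definition proj (X : {set 'I_n}) (a : Conf d) : Conf d :=
  [ffun i => if i \in X then a i else z i].
Definition fam (a : Conf d) : {ffun {set 'I_n} -> Conf d} :=
  [ffun X => if X \in xi then proj X a else z].
Definition glue (f : {ffun {set 'I_n} -> Conf d}) : Conf d :=
  [ffun i => f (pblock xi i) i].

Lemma restr_proj X a : restr X (proj X a) = restr X a.
Proof. by apply/ffunP => -[i Hi]; rewrite !ffunE /= Hi. Qed.

Lemma fubini (C : comSemiRingType) (F : forall X, ConfX d X -> C) :
  \sum_(a : Conf d) \prod_(X in xi) F X (restr X a) =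
  \prod_(X in xi) \sum_(u : ConfX d X) F X u.
Proof.
case/and3P: Hp => /eqP Hcov Htriv _.
have Hc i : i \in cover xi by rewrite Hcov inE.
under [RHS]eq_bigr => X _ do rewrite sum_ConfX.
rewrite (big_distr_big_dep z).
rewrite (reindex_onto fam glue) /=; last first.
  move=> f /pfamilyP [Hsup Hin]; apply/ffunP => X; rewrite ffunE.
  case HX: (X \in xi).
    apply/ffunP => i; rewrite ffunE.
    case Hi: (i \in X).
      by rewrite ffunE (def_pblock Htriv HX Hi).
    have := Hin X HX; rewrite /ZZ /= => /forallP /(_ i); rewrite Hi /= => /eqP ->.
    done.
  apply/esym/eqP; apply: contraFT HX => HX.
  by apply: (subsetP Hsup); rewrite inE.
apply: eq_big => a.
  rewrite [RHS]/=; symmetry; apply/andP; split.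
    apply/pfamilyP; split.
      by apply/subsetP => X; rewrite inE ffunE; case: (X \in xi) => //; rewrite eqxx.
    move=> X HX; rewrite ffunE HX /ZZ /=; apply/forallP => i; apply/implyP => Hi.
    by rewrite ffunE (negbTE Hi).
  apply/eqP/ffunP => i; rewrite !ffunE (pblock_mem (Hc i)) ffunE.
  by rewrite mem_pblock Hc.
move=> _; apply: eq_bigr => X HX; rewrite ffunE HX.
by rewrite restr_proj.
Qed.
End Fub.

Section Main.
Variables (n : nat) (d : 'I_n -> nat) (C : numClosedFieldType).
Hypothesis Hd : forall i, (1 < d i)%N.

Definition zero k : 'I_(d k) := Ordinal (ltnW (Hd k)).
Definition one k : 'I_(d k) := Ordinal (Hd k).
Lemma one_zero k : one k != zero k.
Proof. by []. Qed.

Definition z : Conf d := [ffun k => zero k].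
Definition cx X (u : ConfX d X) : forall k : {k : 'I_n | k \in X}, 'I_(d (val k)) :=
  fun k => (u : {dffun forall k : {k : 'I_n | k \in X}, 'I_(d (val k))}) k.
Arguments cx {X} u k.

Definition allz X (u : ConfX d X) := [forall k, cx u k == zero (val k)].
Definition allo X (u : ConfX d X) := [forall k, cx u k == one (val k)].
Arguments allz {X} u. Arguments allo {X} u.
Definition h X (u : ConfX d X) : C := 2^-1 * ((allz u)%:R + (allo u)%:R).
Arguments h {X} u.
Definition fX X (u v : ConfX d X) : C := if u == v then h u else 0.

Lemma diag_psd (T : finType) (r : T -> T -> C) :
  (forall a b, a != b -> r a b = 0) -> (forall a, 0 <= r a a) ->
  forall v : T -> C, 0 <= \sum_(a : T) \sum_(b : T) (v a)^* * r a b * v b.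
Proof.
move=> H0 Hp v; apply: sumr_ge0 => a _.
rewrite (bigD1 a) //= big1 ?addr0; last first.
  by move=> b Hb; rewrite H0 1?eq_sym // mulr0 mul0r.
rewrite mulrC mulrA; apply: mulr_ge0 => //.
exact: mul_conjC_ge0.
Qed.

Lemma h_ge0 X u : 0 <= @h X u.
Proof. by rewrite /h -natrD mulr_ge0 // invr_ge0 ler0n. Qed.

Lemma sum_allz X : \sum_(u : ConfX d X) ((allz u)%:R : C) = 1.
Proof.
rewrite (bigD1 (restr X z)) //=.
have -> : allz (restr X z) by apply/forallP => k; rewrite /cx !ffunE.
rewrite big1 ?addr0 //= => u Hu.

case Hz: (allz u) => //; case/eqP: Hu; apply/ffunP => k.
by move/forallP: Hz => /(_ k) /eqP; rewrite /cx !ffunE => ->.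
Qed.

Lemma sum_allo X : \sum_(u : ConfX d X) ((allo u)%:R : C) = 1.
Proof.
set z1 : Conf d := [ffun k => one k].
rewrite (bigD1 (restr X z1)) //=.
have -> : allo (restr X z1) by apply/forallP => k; rewrite /cx !ffunE.
rewrite big1 ?addr0 //= => u Hu.

case Hz: (allo u) => //; case/eqP: Hu; apply/ffunP => k.
by move/forallP: Hz => /(_ k) /eqP; rewrite /cx !ffunE => ->.
Qed.

Lemma sum_h X : \sum_(u : ConfX d X) h u = 1.
Proof.
rewrite -big_distrr big_split /= sum_allz sum_allo mulVf //.
by rewrite pnatr_eq0.
Qed.

Lemma fX_density X : is_density (@fX X).
Proof.
split.
  apply: diag_psd => [a b Hab|a]; first by rewrite /fX (negbTE Hab).
  by rewrite /fX eqxx h_ge0.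
by rewrite -(sum_h X); apply: eq_bigr => u _; rewrite /fX eqxx.
Qed.

Variable xi : {set {set 'I_n}}.
Hypothesis Hp : partition xi [set: 'I_n].

Definition rho (a b : Conf d) : C :=
  if a == b then \prod_(X in xi) h (restr X a) else 0.

Lemma rho_density : is_density rho.
Proof.
split.
  apply: diag_psd => [a b Hab|a]; first by rewrite /rho (negbTE Hab).
  by rewrite /rho eqxx; apply: prodr_ge0 => X _; apply: h_ge0.
under eq_bigr => a _ do rewrite /rho eqxx.
rewrite (@fubini _ _ z _ Hp _ (fun X u => h u)).
by rewrite big1 // => X _; apply: sum_h.
Qed.

Lemma rho_unc : D_unc xi rho.
Proof.
split; first exact: rho_density.
exists (fun X => @fX X); split; first by move=> X _; apply: fX_density.
move=> a b; rewrite /rho.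
case: eqP => [<-|Hab].
  by apply: eq_bigr => X _; rewrite /fX eqxx.
have [k Hk] : exists k, a k != b k.
  apply/existsP; apply: contraT; rewrite negb_exists => /forallP Hall.
  by case: Hab; apply/ffunP => k; move: (Hall k); rewrite negbK => /eqP.
case/and3P: Hp => /eqP Hcov Htriv _.
have Hc : k \in cover xi by rewrite Hcov inE.
rewrite (bigD1 (pblock xi k)) ?pblock_mem //= /fX.
case: eqP => [E|_]; last by rewrite mul0r.
move/ffunP: E => /(_ (exist _ k (etrans (mem_pblock _ _) Hc))).
by rewrite !ffunE /= => E; rewrite E eqxx in Hk.
Qed.


Definition cfg (S : {set 'I_n}) : Conf d :=
  [ffun k => if k \in S then one k else zero k].

Lemma restr_cfg (Y S S' : {set 'I_n}) : (forall k, k \in Y -> (k \in S) = (k \in S')) ->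
  restr Y (cfg S) = restr Y (cfg S').
Proof.
by move=> H; apply/ffunP => -[k Hk]; rewrite !ffunE /= (H k Hk).
Qed.

Lemma h_cfg (X S : {set 'I_n}) : (X \subset S) || [disjoint X & S] -> h (restr X (cfg S)) != 0.
Proof.
move=> HS; rewrite /h -natrD mulf_neq0 // ?invr_eq0 ?pnatr_eq0 //.
rewrite addn_eq0 negb_and.
case/orP: HS => HS.
  rewrite orbC; apply/orP; left; rewrite eqb0 negbK.
  apply/forallP => -[k Hk]; rewrite /cx !ffunE /= (subsetP HS _ Hk).
  done.
apply/orP; left; rewrite eqb0 negbK.
apply/forallP => -[k Hk]; rewrite /cx !ffunE /= (disjointFr HS Hk).
done.
Qed.

Lemma rho_cfg_neq0 (X S : {set 'I_n}) : X \in xi -> (S = set0 \/ S = X) -> rho (cfg S) (cfg S) != 0.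
Proof.
case/and3P: Hp => _ Htriv _ HX HS.
rewrite /rho eqxx; apply/prodf_neq0 => X' HX'.
apply: h_cfg.
case: HS => ->; first by apply/orP; right; rewrite disjoint_sym; apply: eq_disjoint0 => x; rewrite inE.
case: (X' =P X) => [->|Hne]; first by rewrite subxx.
by rewrite (trivIsetP Htriv) // ?orbT //; apply/eqP.
Qed.

Lemma key (eta : {set {set 'I_n}}) : partition eta [set: 'I_n] ->
  D_unc eta rho -> refines xi eta.
Proof.
move=> Hpe [_ [g [_ Hg]]] X HX.
case/and3P: Hp => _ Htriv H0.
case/and3P: Hpe => /eqP Hcov Htrive _.
have HX0 : X != set0 by apply: contraNneq H0 => <-.
case/set0Pn: HX0 => i Hi.
set Y1 := pblock eta i.
have Hc k : k \in cover eta by rewrite Hcov inE.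
have HY1 : Y1 \in eta by apply: pblock_mem.
exists Y1 => //.
apply/subsetP => j Hj; apply/negPn/negP => Hnj.
pose a0 := cfg set0. pose a1 := cfg X.
pose b := cfg (X :&: Y1). pose c := cfg (X :\: Y1).
have Hb : rho b b = 0.
  rewrite /rho eqxx; apply/eqP/prodf_eq0; exists X => //.
  rewrite /h.
  have -> : allz (restr X b) = false.
    apply/negbTE/forallP => /(_ (exist _ i Hi)).
    by rewrite /cx !ffunE /= inE Hi mem_pblock Hc.
  have -> : allo (restr X b) = false.
    apply/negbTE/forallP => /(_ (exist _ j Hj)).
    by rewrite /cx !ffunE /= inE Hj (negbTE Hnj).
  by rewrite addr0 mulr0.
have Heq : rho b b * rho c c = rho a0 a0 * rho a1 a1.
  rewrite !Hg -!big_split /=; apply: eq_bigr => Y HY.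
  case: (Y =P Y1) => [->|Hne].
    rewrite (@restr_cfg Y1 (X :&: Y1) X); last by move=> k Hk; rewrite inE Hk andbT.
    rewrite (@restr_cfg Y1 (X :\: Y1) set0); last by move=> k Hk; rewrite !inE Hk.
    by rewrite mulrC.
  have Hd' : [disjoint Y & Y1] by apply: (trivIsetP Htrive) => //; apply/eqP.
  rewrite (@restr_cfg Y (X :&: Y1) set0); last first.
    by move=> k Hk; rewrite !inE (disjointFr Hd' Hk) andbF.
  rewrite (@restr_cfg Y (X :\: Y1) X) //.
  by move=> k Hk; rewrite !inE (disjointFr Hd' Hk).
move: Heq; rewrite Hb mul0r => /esym /eqP.
by apply/negP; rewrite mulf_neq0 //; apply: (rho_cfg_neq0 _ _ HX); [left | right].
Qed.

End Main.

Lemma exists_C (n : nat) (d : 'I_n -> nat)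
  (Hd : forall i, (1 < d i)%N) (C : numClosedFieldType)
  (PS : {set {set {set {set 'I_n}}}})
  (HPS : is_PIIstar PS) (Hchain : is_chain PS)
  (Xi : {set {set {set {set 'I_n}}}})
  (HXi : is_PIIIstar PS Xi) :
  exists rho : Conf d -> Conf d -> C, C_unc PS Xi rho.
Proof.
case: HPS => _ HPII.
case: HXi => HXi0 [HXiPS Hup].
case/set0Pn: HXi0 => S0 HS0.
case: (arg_minnP (fun S : {set {set {set 'I_n}}} => #|S|) HS0) => M HM Hmin.
have HMPS : M \in PS by apply: (subsetP HXiPS).
case: (HPII M HMPS) => HM0 [HMpart HMdown].
have [xi Hxi Havoid] : exists2 xi, xi \in M &
    forall S', S' \in PS -> S' \notin Xi -> xi \notin S'.
  case: (set0Pn (PS :\: Xi)) => [[S1 HS1]|Hemp].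
    case: (arg_maxnP (fun S : {set {set {set 'I_n}}} => #|S|) HS1) => Sm HSm Hmax.
    have : Sm \in PS :\: Xi by []. rewrite in_setD => /andP [HSmX HSmPS].
    have HnMS : ~~ (M \subset Sm).
      by apply: contra HSmX => HMS; apply: (Hup M).
    case/subsetPn: HnMS => xi Hxi Hxin.
    exists xi => // S' HS'PS HS'X.
    case: (Hchain _ _ HS'PS HSmPS) => HS'.
      by apply: contra Hxin; apply: (subsetP HS').
    have Hc : (#|S'| <= #|Sm|)%N by apply: Hmax; change (S' \in PS :\: Xi); rewrite in_setD HS'X.
    have /eqP <- : Sm == S' by rewrite eqEcard HS' Hc.
    done.
  case/set0Pn: HM0 => xi Hxi; exists xi => // S' HS'PS HS'X.
  case: Hemp; exists S'; by rewrite inE HS'X.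
have Hxip := HMpart _ Hxi.
exists (@rho n d C Hd xi); split; first exact: (@rho_density n d C Hd xi Hxip).
split.
  move=> S' HS'PS HS'X [eta Heta HD].
  case: (HPII S' HS'PS) => _ [HS'part HS'down].
  have Hr := @key n d C Hd xi Hxip eta (HS'part _ Heta) HD.
  by move: (Havoid S' HS'PS HS'X); rewrite (HS'down eta xi Heta Hxip Hr).
move=> S HS; exists xi; last exact: (@rho_unc n d C Hd xi Hxip).
have HSPS : S \in PS by apply: (subsetP HXiPS).
case: (Hchain _ _ HMPS HSPS) => HMS; first exact: (subsetP HMS).
have Hc := Hmin S HS.
have /eqP -> : S == M by rewrite eqEcard HMS Hc.
done.
Qed.

Theorem proposition6 (n : nat) (Hn : (1 <= n)%N) (d : 'I_n -> nat)
  (Hd : forall i, (1 < d i)%N) (C : numClosedFieldType)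
  (PS : {set {set {set {set 'I_n}}}})
  (HPS : is_PIIstar PS) (Hchain : is_chain PS)
  (Xi Ups : {set {set {set {set 'I_n}}}})
  (HXi : is_PIIIstar PS Xi) (HUps : is_PIIIstar PS Ups) :
  (forall rho : Conf d -> Conf d -> C, C_unc PS Xi rho <-> C_unc PS Ups rho)
  <-> Xi = Ups.
Proof.
split; last by move=> ->.
move=> H.
have side : forall A B, is_PIIIstar PS A ->
    (forall rho : Conf d -> Conf d -> C, C_unc PS A rho -> C_unc PS B rho) ->
    forall S, S \in A -> S \in B.
  move=> A B HA HAB S HS; apply/negPn/negP => HnS.
  have [r Hr] := @exists_C n d Hd C PS HPS Hchain A HA.
  have [_ [HB _]] := HAB r Hr.
  case: HA => _ [HAPS _].
  exact: (HB S (subsetP HAPS _ HS) HnS (Hr.2.2 S HS)).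
apply/setP => S; apply/idP/idP.
  by apply: side => // r /H.
by apply: side => // r /H.
Qed.
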